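(* Fix a base $\beta\ge2$ and mantissa length $t$, and let $u=\beta^{1-t}/2$. For every real matrix $A$ together with a floating-point elimination run that belongs to $\widehat{\mathbf{PP}}_n(\mathbb{R})$, there exists $B\in\mathbf{PP}_n(\mathbb{R})$ such that $b^{(k)}_{i,j}=\hat a^{(k)}_{i,j}$ whenever $i=k$ or $j=k$, and $$\big|\hat a^{(k)}_{i,j}-b^{(k)}_{i,j}\big|\le u\sum_{\ell=k}^{\min\{i,j\}-1}\Big[|\hat a^{(\ell)}_{i,j}|+|\hat a^{(\ell)}_{\ell,j}|(3+u)\Big]$$ for all $k=1,\dots,n-1$ and all $i,j\in\{k,\dots,n\}$.
   Context: Exact Gaussian elimination without pivoting on $B=(b_{i,j})$: $b^{(1)}_{i,j}=b_{i,j}$, $b^{(k+1)}_{i,j}=b^{(k)}_{i,j}-b^{(k)}_{i,k}b^{(k)}_{k,j}/b^{(k)}_{k,k}$ for $k+1\le i,j\le n$. $\mathbf{PP}_n(\mathbb{R})$ is the set of invertible real $n\times n$ matrices for which this is defined (nonzero pivots) and $|b^{(k)}_{i,k}|\le|b^{(k)}_{k,k}|$ for all $k$ and $i\ge k$. Floating-point model (overflow/underflow ignored): a floating-point elimination run on a real $n\times n$ matrix $A$ is an array of numbers $\hat a^{(k)}_{i,j}$ given by $\hat a^{(1)}_{i,j}=a_{i,j}(1+\phi^{(0)}_{i,j})$ and $\hat a^{(k+1)}_{i,j}=\big[\hat a^{(k)}_{i,j}-s_{i,k}\hat a^{(k)}_{k,j}(1+\theta^{(k)}_{i,j})\big](1+\phi^{(k)}_{i,j})$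 for $k+1\le i,j\le n$, $k=1,\dots,n-1$, where $s_{i,k}=\frac{\hat a^{(k)}_{i,k}}{\hat a^{(k)}_{k,k}}(1+\varphi_{i,k})$, for some choice of parameters with $|\theta^{(k)}_{i,j}|,|\phi^{(k)}_{i,j}|,|\varphi_{i,k}|\le u$. $\widehat{\mathbf{PP}}_n(\mathbb{R})$ consists of (invertible $A$, run) pairs such that all $\hat a^{(k)}_{k,k}\ne0$, $|\hat a^{(k)}_{i,k}|\le|\hat a^{(k)}_{k,k}|$ for all $k$ and $i\ge k$, and moreover $|s_{i,k}|\le1$ and $|s_{i,k}(1+\theta^{(k)}_{i,j})|\le1$ for all $i,j,k$. *)

(* Defs.v *)
From HB Require Import structures.
From mathcomp Require Import all_boot all_order all_algebra.
Set Implicit Arguments. Unset Strict Implicit. Unset Printing Implicit Defensive.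
Import Order.TTheory GRing.Theory Num.Theory.
Local Open Scope ring_scope.

Section GE.
Variable R : realFieldType.
Variable n : nat.

(* 1-based entry access: ent A i j = a_{i,j} for 1 <= i, j <= n (0 outside). *)
Definition ent (A : 'M[R]_n) (i j : nat) : R :=
  match (insub i.-1 : option 'I_n), (insub j.-1 : option 'I_n) with
  | Some i', Some j' => A i' j'
  | _, _ => 0
  end.

(* Exact elimination.  gx B m = b^{(m+1)} (1-based indices).  Entries
   outside the active block k+1 <= i, j are simply carried over (they are
   never used). *)
Fixpoint gx (B : 'M[R]_n) (m : nat) (i j : nat) {struct m} : R :=
  match m with
  | 0 => ent B i j
  | m'.+1 =>
      let k := m'.+1 in
      if (k < i)%N && (k < j)%N then
        gx B m' i j - gx B m' i k * gx B m' k j / gx B m' k k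
      else gx B m' i j
  end.

Definition bel (B : 'M[R]_n) (k i j : nat) : R := gx B k.-1 i j.

Definition PP (B : 'M[R]_n) : Prop :=
  B \in unitmx /\
  (forall k, (1 <= k < n)%N -> bel B k k k != 0) /\
  (forall k i, (1 <= k)%N -> (k <= i <= n)%N -> `|bel B k i k| <= `|bel B k k k|).

(* Floating-point elimination run on A with rounding parameters
   th k i j = theta^{(k)}_{i,j}, ph k i j = phi^{(k)}_{i,j}, vp i k = varphi_{i,k}.
   fa m = hat a^{(m+1)}. *)
Fixpoint fa (A : 'M[R]_n) (th ph : nat -> nat -> nat -> R) (vp : nat -> nat -> R)
    (m : nat) (i j : nat) {struct m} : R :=
  match m with
  | 0 => ent A i j * (1 + ph 0%N i j)
  | m'.+1 =>
      let k := m'.+1 in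
      if (k < i)%N && (k < j)%N then
        (fa A th ph vp m' i j
          - (fa A th ph vp m' i k / fa A th ph vp m' k k * (1 + vp i k))
            * fa A th ph vp m' k j * (1 + th k i j)) * (1 + ph k i j)
      else fa A th ph vp m' i j
  end.

Definition ahat A th ph vp (k i j : nat) : R := fa A th ph vp k.-1 i j.

Definition smul A th ph vp (i k : nat) : R :=
  ahat A th ph vp k i k / ahat A th ph vp k k k * (1 + vp i k).

Definition fp_params (u : R) (th ph : nat -> nat -> nat -> R) (vp : nat -> nat -> R) : Prop :=
  (forall k i j, `|th k i j| <= u) /\ (forall k i j, `|ph k i j| <= u) /\
  (forall i k, `|vp i k| <= u).

Definition PPhat (A : 'M[R]_n) th ph vp : Prop :=
  A \in unitmx /\
  (forall k, (1 <= k <= n)%N -> ahat A th ph vp k k k != 0) /\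
  (forall k i, (1 <= k)%N -> (k <= i <= n)%N ->
     `|ahat A th ph vp k i k| <= `|ahat A th ph vp k k k|) /\
  (forall k i j, (1 <= k < n)%N -> (k < i <= n)%N -> (k < j <= n)%N ->
     `|smul A th ph vp i k| <= 1 /\ `|smul A th ph vp i k * (1 + th k i j)| <= 1).

End GE.

Definition unit_roundoff (R : realFieldType) (beta t : nat) : R :=
  (beta%:R : R) ^ (1 - t%:Z) / 2.

(* Main.v *)
Require Import Defs.
From HB Require Import structures.
From mathcomp Require Import all_boot all_order all_algebra.
From mathcomp Require Import ring lra zify.
Import Order.TTheory GRing.Theory Num.Theory.
Local Open Scope ring_scope.

Lemma nb1 (R : realFieldType) (a b u : R) : `|a| <= 1 -> `|b| <= u -> `|a * b| <= u.
Proof.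
move=> ha hb; rewrite normrM -[u]mul1r; apply: ler_pM => //.
Qed.

Lemma term_bound (R : realFieldType) (u x y r vp th ph : R) :
  0 <= u -> `|th| <= u -> `|ph| <= u -> `|vp| <= u -> `|r| <= 1 ->
  `|r * (1 + vp)| <= 1 -> `|r * (1 + vp) * (1 + th)| <= 1 ->
  `|x - (x - r * (1 + vp) * y * (1 + th)) * (1 + ph) - r * y| <= u * (`|x| + `|y| * (3 + u)).
Proof.
move=> u0 hth hph hvp hr hs hst.
have -> : x - (x - r * (1 + vp) * y * (1 + th)) * (1 + ph) - r * y =
   - (ph * x) + y * (r * (1 + vp) * (1 + th) * ph + r * (1 + vp) * th + r * vp) by ring.
apply: (le_trans (ler_normD _ _)).
rewrite normrN [u * _]mulrDr.
apply: lerD.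
  by rewrite normrM; apply: ler_wpM2r.
rewrite normrM.
have h3 : `|r * (1 + vp) * (1 + th) * ph + r * (1 + vp) * th + r * vp| <= u * 3.
  apply: (le_trans (ler_normD _ _)).
  apply: (@le_trans _ _ (u + u + u)); last by lra.
  apply: lerD; last exact: nb1.
  apply: (le_trans (ler_normD _ _)).
  by apply: lerD; apply: nb1.
rewrite mulrCA; apply: ler_wpM2l => //.
apply: (le_trans h3); rewrite mulrDr; nra.
Qed.

Section Main.
Variable R : realFieldType.
Variable n : nat.
Variables (A : 'M[R]_n) (th ph : nat -> nat -> nat -> R) (vp : nat -> nat -> R).
Local Notation a := (ahat A th ph vp).

Definition Cf (k i j : nat) : R :=
  a (minn i j) i j + \sum_(k <= l < minn i j) (a l i l * a l l j / a l l l).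

Definition Bm : 'M[R]_n := \matrix_(i, j) Cf 1 i.+1 j.+1.

Lemma ent_Bm i j : (1 <= i <= n)%N -> (1 <= j <= n)%N -> ent Bm i j = Cf 1 i j.
Proof.
case: i => // i; case: j => // j /= hi hj.
by rewrite /ent /= (insubT (fun k => k < n)%N hi) (insubT (fun k => k < n)%N hj) mxE.
Qed.

Lemma Cf_diag k i j : (minn i j = k) -> Cf k i j = a k i j.
Proof. by move=> h; rewrite /Cf h big_geq // addr0. Qed.

Lemma bel_Bm k : (1 <= k)%N -> forall i j, (k <= i <= n)%N -> (k <= j <= n)%N ->
  bel Bm k i j = Cf k i j.
Proof.
case: k => // k _; elim: k => [|k IH] i j /andP[hi hin] /andP[hj hjn].
  by rewrite /bel /= ent_Bm ?hi ?hj ?hin ?hjn.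
rewrite /bel /= hi hj /=.
have e := IH; rewrite /bel /= in e.
have kn : (k < n)%N by lia.
have kn' : (k.+1 <= n)%N by lia.
rewrite !e ?hin ?hjn ?(ltnW hi) ?(ltnW hj) ?leqnn ?kn ?kn' ?andbT //.
rewrite (Cf_diag k.+1 i k.+1); last by apply/minn_idPr; exact: ltnW.
rewrite (Cf_diag k.+1 k.+1 j); last by apply/minn_idPl; exact: ltnW.
rewrite (Cf_diag k.+1 k.+1 k.+1); last by rewrite minnn.
rewrite /Cf big_ltn; last by rewrite leq_min hi hj.
ring.
Qed.


Lemma a_step l i j : (1 <= l)%N -> (l < i)%N -> (l < j)%N ->
  a l.+1 i j = (a l i j - (a l i l / a l l l * (1 + vp i l)) * a l l j * (1 + th l i j))
                 * (1 + ph l i j).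
Proof. by case: l => // l _ hi hj; rewrite /ahat /= hi hj. Qed.

Lemma err_eq k i j : (k <= minn i j)%N ->
  a k i j - Cf k i j =
  \sum_(k <= l < minn i j) (a l i j - a l.+1 i j - a l i l * a l l j / a l l l).
Proof.
move=> hk; rewrite sumrB (telescope_sumr_eq (fun l => - a l i j)) //.
  by rewrite /Cf; ring.
by move=> l _; rewrite opprK addrC.
Qed.

Lemma err_bound u k i j : fp_params u th ph vp -> PPhat A th ph vp ->
  (1 <= k)%N -> (k <= i <= n)%N -> (k <= j <= n)%N ->
  `|a k i j - Cf k i j| <=
     u * \sum_(k <= l < minn i j) (`|a l i j| + `|a l l j| * (3 + u)).
Proof.
move=> [Hth [Hph Hvp]] [_ [Hpiv [Hdom Hs]]] hk /andP[hi hin] /andP[hj hjn].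
have u0 : 0 <= u by apply: le_trans (Hth 0%N 0%N 0%N).
rewrite err_eq ?leq_min ?hi ?hj // mulr_sumr.
apply: (le_trans (ler_norm_sum _ _ _)).
rewrite big_nat [X in _ <= X]big_nat; apply: ler_sum => l /andP[hkl hl].
move: hl; rewrite leq_min => /andP[hli hlj].
have l1 : (1 <= l)%N by lia.
have lpiv : a l l l != 0 by apply: Hpiv; lia.
have [hs1 hs2] := Hs l i j ltac:(lia) ltac:(lia) ltac:(lia).
rewrite /smul in hs1 hs2.
have -> : a l i l * a l l j / a l l l = a l i l / a l l l * a l l j by rewrite mulrAC.
rewrite a_step //.
apply: (term_bound _ u (a l i j) (a l l j) (a l i l / a l l l) (vp i l) (th l i j) (ph l i j)) => //.
rewrite normrM normfV ler_pdivrMr ?normr_gt0 // mul1r.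
apply: Hdom => //; lia.


Qed.

Definition Lmat : 'M[R]_n := \matrix_(i, l)
  (if (l < i)%N then a l.+1 i.+1 l.+1 / a l.+1 l.+1 l.+1
   else if (l == i :> nat) then 1 else 0).
Definition Umat : 'M[R]_n := \matrix_(l, j) (if (l <= j)%N then a l.+1 l.+1 j.+1 else 0).

Lemma Bm_LU : (forall k, (1 <= k <= n)%N -> a k k k != 0) -> Bm = Lmat *m Umat.
Proof.
move=> Hpiv; apply/matrixP => i j; rewrite !mxE.
pose F (l : nat) := (if (l < i)%N then a l.+1 i.+1 l.+1 / a l.+1 l.+1 l.+1
   else if (l == i :> nat) then 1 else 0) * (if (l <= j)%N then a l.+1 l.+1 j.+1 else 0).
rewrite (eq_bigr (fun l : 'I_n => F l)); last by move=> l _; rewrite !mxE.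
rewrite -(big_mkord xpredT F).
have hi := ltn_ord i; have hj := ltn_ord j.
have hm : (minn i j < n)%N by lia.
rewrite (big_cat_nat _ (n:=(minn i j).+1)) //= big_nat_recr //=.
rewrite [X in _ + X]big_nat_cond [X in _ + X]big1 ?addr0; last first.
  move=> l /andP[/andP[h1 h2] _]; rewrite /F.
  case: (leqP i j) => hij.
    have -> : (l < i)%N = false by lia.
    have -> : (l == i :> nat) = false by apply/eqP; lia.
    by rewrite mul0r.
  have -> : (l <= j)%N = false by lia.
  by rewrite mulr0.
rewrite /Cf minnSS big_add1 /= addrC; congr (_ + _).
  rewrite /F /=; case: (leqP i j) => hij.
    have -> : (i < i)%N = false by lia.
    by rewrite eqxx hij mul1r.
  have -> : (j <= j)%N by lia.
  rewrite hij divfK //; apply: Hpiv; lia.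
apply: eq_big_nat => l hl; rewrite /F.
have -> : (l < i)%N by lia.
have -> : (l <= j)%N by lia.
by rewrite mulrAC.
Qed.

Lemma Bm_unit : (forall k, (1 <= k <= n)%N -> a k k k != 0) -> Bm \in unitmx.
Proof.
move=> Hpiv; rewrite Bm_LU // unitmx_mul !unitmxE -(det_tr Umat) !det_trig.
- rewrite !unitfE; apply/andP; split; apply/prodf_neq0 => i _; rewrite !mxE.
    have -> : (i < i)%N = false by lia.
    by rewrite eqxx oner_neq0.
  have := ltn_ord i; rewrite ifT; [move=> ?; apply: Hpiv|]; lia.
- apply/is_trig_mxP => i j hij; rewrite !mxE.
  have -> : (j < i)%N = false by lia.
  have -> : (j == i :> nat) = false by apply/eqP; lia.
  done.
apply/is_trig_mxP => i j hij; rewrite !mxE.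
have -> : (j <= i)%N = false by lia.
done.
Qed.

End Main.

Theorem mainTheorem8 (R : realFieldType) (beta t n : nat)
  (hbeta : (2 <= beta)%N) (ht : (1 <= t)%N)
  (A : 'M[R]_n) (th ph : nat -> nat -> nat -> R) (vp : nat -> nat -> R) :
  let u := unit_roundoff R beta t in
  fp_params u th ph vp ->
  PPhat A th ph vp ->
  exists B : 'M[R]_n, PP B /\
    (forall k i j, (1 <= k <= n)%N -> (k <= i <= n)%N -> (k <= j <= n)%N ->
       (i == k) || (j == k) -> bel B k i j = ahat A th ph vp k i j) /\
    (forall k i j, (1 <= k < n)%N -> (k <= i <= n)%N -> (k <= j <= n)%N ->
       `|ahat A th ph vp k i j - bel B k i j| <=
         u * \sum_(k <= l < minn i j)
               (`|ahat A th ph vp l i j| + `|ahat A th ph vp l l j| * (3 + u))).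
Proof.
move=> u hfp hPP.
have hPP' := hPP; case: hPP' => [_ [Hpiv [Hdom Hs]]].
exists (@Bm R n A th ph vp); split; [split; [exact: Bm_unit | split] | split].
- move=> k hk.
  have hm : minn k k = k by lia.
  rewrite (bel_Bm _ _ _ _ _ _ k _ k k) ?(Cf_diag _ _ _ _ _ _ _ _ _ hm); [|lia|lia|lia].
  apply: Hpiv; lia.
- move=> k i hk hi.
  have hm : minn i k = k by lia.
  have hm' : minn k k = k by lia.
  rewrite (bel_Bm _ _ _ _ _ _ k _ i k) ?(Cf_diag _ _ _ _ _ _ _ _ _ hm); [|lia|lia|lia].
  rewrite (bel_Bm _ _ _ _ _ _ k _ k k) ?(Cf_diag _ _ _ _ _ _ _ _ _ hm'); [|lia|lia|lia].
  exact: Hdom.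
- move=> k i j hk hi hj hij.
  have hm : minn i j = k by case/orP: hij => /eqP ->; lia.
  by rewrite (bel_Bm _ _ _ _ _ _ k _ i j) ?(Cf_diag _ _ _ _ _ _ _ _ _ hm); [|lia|lia|lia].
- move=> k i j hk hi hj.
  rewrite (bel_Bm _ _ _ _ _ _ k _ i j); [|lia|lia|lia].
  apply: err_bound => //; lia.
Qed.
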